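(* Let $0\le\alpha\le2$, $1+\mu>0$ and $\gamma>0$. There is a constant $C$, depending only on lower bounds for $\gamma$ and $1+\mu$, such that for every $u\in C^1_0([0,\infty))$ and every $t\ge0$, $$\int_0^t\frac{u^2}{(1+|r-t|)^{2+\mu}}\frac{r^2\,dr}{(1+t+r)^\alpha}+\int_t^\infty\frac{u^2}{(1+|r-t|)^{1-\gamma}}\frac{r^2\,dr}{(1+t+r)^\alpha}\le C\int_0^t\frac{|\partial_ru|^2}{(1+|r-t|)^\mu}\frac{r^2\,dr}{(1+t+r)^\alpha}+C\int_t^\infty|\partial_ru|^2\frac{(1+|r-t|)^{1+\gamma}}{(1+t+r)^\alpha}r^2\,dr .$$
   Context: $C^1_0([0,\infty))$ denotes continuously differentiable functions on $[0,\infty)$ with compact support (not necessarily vanishing at $r=0$). *)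

(* Defs.v *)
From HB Require Import structures.
From mathcomp Require Import all_boot all_order all_algebra.
From mathcomp Require Import all_classical all_reals all_analysis.
Set Implicit Arguments. Unset Strict Implicit. Unset Printing Implicit Defensive.
Import Order.TTheory GRing.Theory Num.Theory.
Import numFieldNormedType.Exports.
Local Open Scope classical_set_scope.
Local Open Scope ring_scope.

Definition C1_0 (R : realType) (u du : R -> R) : Prop :=
  (forall r : R, 0 < r -> is_derive r 1 u (du r)) /\
  (fun h : R => h^-1 * (u h - u 0)) @ 0^'+ --> du 0 /\
  {within `[0, +oo[, continuous du} /\
  (exists M : R, forall r : R, M < r -> u r = 0).

(* Main.v *)
Require Import Defs.
From HB Require Import structures.
From mathcomp Require Import all_boot all_order all_algebra.
From mathcomp Require Import all_classical all_reals all_analysis.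
From mathcomp Require Import ring lra measurable_realfun.
Import Order.TTheory GRing.Theory Num.Theory.
Import numFieldNormedType.Exports.
Local Open Scope classical_set_scope.
Local Open Scope ring_scope.

Section H.
Context {R : realType}.

Lemma key_ineq (c phi dphi w1 w2 x y : R) : 0 < c -> 0 <= w1 -> 0 <= w2 ->
  c * w1 <= dphi -> phi ^+ 2 = w1 * w2 ->
  w1 * x ^+ 2 <= (2 / c) * (dphi * x ^+ 2 + 2 * phi * x * y) + (4 / c ^+ 2) * (w2 * y ^+ 2).
Proof.
move=> c0 w10 w20 hd hphi.
have [w1z|w1p] := eqVneq w1 0.
  have -> : phi = 0 by apply/eqP; rewrite -sqrf_eq0 hphi w1z mul0r.
  rewrite w1z mul0r ?mulr0 ?mul0r ?addr0.
  have hd0 : 0 <= dphi by apply: le_trans hd; rewrite w1z mulr0.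
  apply: addr_ge0; apply: mulr_ge0.
  - by rewrite divr_ge0 // ltW.
  - by apply: mulr_ge0 => //; exact: sqr_ge0.
  - by rewrite divr_ge0 // exprn_ge0 // ltW.
  - by apply: mulr_ge0 => //; exact: sqr_ge0.
have w1g : 0 < w1 by rewrite lt_def w1p w10.
set k := c / 2.
have kp : 0 < k by rewrite divr_gt0.
have hsq : 0 <= k * w1 * (k * w1 * x ^+ 2 + w2 * y ^+ 2 / k + 2 * phi * x * y).
  have -> : k * w1 * (k * w1 * x ^+ 2 + w2 * y ^+ 2 / k + 2 * phi * x * y)
    = (k * w1 * x + phi * y) ^+ 2.
    rewrite sqrrD !exprMn hphi /k; field; by rewrite gt_eqF.
  exact: sqr_ge0.
have hb : 0 <= k * w1 * x ^+ 2 + w2 * y ^+ 2 / k + 2 * phi * x * y.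
  by rewrite -(pmulr_rge0 _ (mulr_gt0 kp w1g)).
have e1 : c * w1 * x ^+ 2 <= dphi * x ^+ 2 by apply: ler_wpM2r => //; exact: sqr_ge0.
have e2 : (2 / c) * (dphi * x ^+ 2 + 2 * phi * x * y) + (4 / c ^+ 2) * (w2 * y ^+ 2) - w1 * x ^+ 2
   = (2 / c) * ((dphi * x ^+ 2 - c * w1 * x ^+ 2) + (k * w1 * x ^+ 2 + w2 * y ^+ 2 / k + 2 * phi * x * y)).
  rewrite /k; field; by rewrite gt_eqF.
rewrite -subr_ge0 e2; apply: mulr_ge0; first by rewrite divr_ge0 // ltW.
by apply: addr_ge0 => //; rewrite subr_ge0.
Qed.

Lemma aff_pow_derive (c s e x : R) : 0 < c + s * x ->
  is_derive x 1 (fun r => (c + s * r) `^ e) (e * ((c + s * x) `^ e / (c + s * x)) * s).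
Proof.
move=> hx.
have h1 : is_derive x 1 (fun r => c + s * r) s.
  have := is_deriveD (is_derive_cst c x 1) (is_deriveZ s (is_derive_id x 1)).
  have -> : (cst c + s *: id) = (fun r => c + s * r).
    by apply/funext => r /=.
  by rewrite add0r /= -[s%:A]/(s * 1) mulr1.
have h2 := is_derive1_powR e hx.
have := is_derive1_comp (f := fun y : R => y `^ e) (g := fun r : R => c + s * r) h2 h1.
rewrite powRB; last by rewrite (gt_eqF hx) implybT.
by rewrite powRr1 // ltW.
Qed.

Lemma ext_cont (f : R -> R) : {in `]0, +oo[, continuous f} -> f @ 0^'+ --> f 0 ->
  continuous (fun r : R => f (Num.max r 0)).
Proof.
move=> cf f0 x.
case: (ltgtP x 0) => hx.
- rewrite /continuous_at (max_r (ltW hx)).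
  apply: cvg_near_cst; near=> y.
  have y0 : y < 0 by near: y; exact: lt_nbhsl.
  by rewrite (max_r (ltW y0)).
- rewrite /continuous_at (max_l (ltW hx)).
  apply: cvg_trans (cf x _); last by rewrite in_itv /= hx.
  apply: (near_eq_cvg (f := f)); near=> y.
  have y0 : 0 < y by near: y; exact: lt_nbhsr.
  by rewrite (max_l (ltW y0)).
- subst x; apply/left_right_continuousP; rewrite maxxx; split.
  + apply: cvg_near_cst; near=> y.
    have y0 : y < 0 by near: y; exact: nbhs_left_lt.
    by rewrite (max_r (ltW y0)).
  + apply: cvg_trans f0.
    apply: (near_eq_cvg (f := f)); near=> y.
    have y0 : 0 < y by near: y; exact: nbhs_right_gt.
    by rewrite (max_l (ltW y0)).
Unshelve. all: by end_near.
Qed.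

Notation leb := (@lebesgue_measure R).
Lemma int_cc (a b : R) (f : R -> R) : {in `[a, b], continuous f} ->
  leb.-integrable `[a, b] (EFin \o f).
Proof.
move=> cf; apply: continuous_compact_integrable; first exact: segment_compact.
by apply: continuous_in_subspaceT; apply/in_continuous_mksetP.
Qed.

Lemma piece (a b k1 k2 : R) (f1 f2 p P : R -> R) :
  a < b -> 
  {in `[a, b], continuous f1} -> {in `[a, b], continuous f2} ->
  {in `[a, b], continuous p} ->
  {in `]a, b[, forall x : R, is_derive x 1 P (p x)} ->
  P @ a^'+ --> P a -> P @ b^'- --> P b ->
  {in `[a, b], forall x, f1 x <= k1 * p x + k2 * f2 x} ->
  (\int[leb]_(x in `[a, b]) (f1 x)%:E <=
    (k1 * (P b - P a))%:E + k2%:E * \int[leb]_(x in `[a, b]) (f2 x)%:E)%E.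
Proof.
move=> ab cf1 cf2 cp dP Pa Pb hle.
have i1 := @int_cc a b _ cf1.
have i2 := @int_cc a b _ cf2.
have ip := @int_cc a b _ cp.
have FTC : (\int[leb]_(x in `[a, b]) (p x)%:E = (P b)%:E - (P a)%:E)%E.
  apply: continuous_FTC2 => //.
  - by apply: continuous_in_subspaceT; apply/in_continuous_mksetP.
  - split => //; move=> x /dP; case => //.
  - by move=> x /dP hx; rewrite derive1E derive_val.
have i3 : leb.-integrable `[a, b] (EFin \o (fun x => k1 * p x + k2 * f2 x)).
  apply: int_cc => x xab.
  have := continuousD (continuousM (@cst_continuous _ _ k1 x) (cp x xab))
     (continuousM (@cst_continuous _ _ k2 x) (cf2 x xab)).
  exact.
apply: (@le_trans _ _ (\int[leb]_(x in `[a, b]) ((k1 * p x + k2 * f2 x)%:E))%E).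
  apply: le_integral => // x /set_mem /= xab; rewrite lee_fin; exact: hle.
under eq_integral => x _ do rewrite EFinD !EFinM.
rewrite integralD //.
- rewrite !integralZl // FTC EFinM EFinB.
  done.
- by apply: integrableZl.
- by apply: integrableZl.
Qed.


Lemma cont_of_derive (f : R -> R) (x df : R) : is_derive x 1 f df -> {for x, continuous f}.
Proof. by move=> [d _]; apply: differentiable_continuous; exact/derivable1_diffP. Qed.

Lemma cont_aff_pow (c s e x : R) : 0 < c + s * x ->
  {for x, continuous (fun r => (c + s * r) `^ e)}.
Proof. by move=> h; apply: cont_of_derive; exact: aff_pow_derive. Qed.


Lemma contM' (f g : R -> R) (x : R) : {for x, continuous f} -> {for x, continuous g} ->
  {for x, continuous (fun r => f r * g r)}.
Proof. by move=> hf hg; exact: (continuousM hf hg). Qed.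

Lemma contD' (f g : R -> R) (x : R) : {for x, continuous f} -> {for x, continuous g} ->
  {for x, continuous (fun r => f r + g r)}.
Proof. by move=> hf hg; exact: (continuousD hf hg). Qed.

Lemma contB' (f g : R -> R) (x : R) : {for x, continuous f} -> {for x, continuous g} ->
  {for x, continuous (fun r => f r - g r)}.
Proof. by move=> hf hg; exact: (continuousB hf hg). Qed.

Lemma contV' (f : R -> R) (x : R) : f x != 0 -> {for x, continuous f} ->
  {for x, continuous (fun r => (f r)^-1)}.
Proof. by move=> h hf; exact: (continuousV h hf). Qed.

Lemma contid' (x : R) : {for x, continuous (fun r : R => r)}.
Proof. exact: cvg_id. Qed.

Lemma contcst' (k x : R) : {for x, continuous (fun _ : R => k)}.
Proof. exact: cvg_cst. Qed.

Lemma phi_derive (F G : R -> R) (x dF dG : R) :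
  is_derive x 1 F dF -> is_derive x 1 G dG ->
  is_derive x 1 (fun r => r * r * F r * G r)
    (2 * x * F x * G x + x * x * dF * G x + x * x * F x * dG).
Proof.
move=> hF hG.
have h1 := is_deriveM (is_deriveM (is_deriveM (is_derive_id x 1) (is_derive_id x 1)) hF) hG.
apply: (near_eq_is_derive _ (is_derive_eq h1 _)).
  by apply: filterE => y.
by rewrite /= /GRing.scale /= !fctE; ring.
Qed.

Lemma P_derive (phi u : R -> R) (x dphi du : R) :
  is_derive x 1 phi dphi -> is_derive x 1 u du ->
  is_derive x 1 (fun r => phi r * (u r * u r)) (dphi * (u x * u x) + 2 * phi x * u x * du).
Proof.
move=> hF hG.
have h1 := is_deriveM hF (is_deriveM hG hG).
apply: (near_eq_is_derive _ (is_derive_eq h1 _)).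
  by apply: filterE => y.
by rewrite /= /GRing.scale /= !fctE; ring.
Qed.

End H.

Ltac cont_tac := repeat match goal with
  | |- prop_for _ _ => rewrite /prop_for /=
  | |- @continuous_at _ _ _ (fun _ => ?k) => apply: contcst'
  | |- @continuous_at _ _ _ (fun r => r) => apply: contid'
  | |- @continuous_at _ _ _ (fun r => @?f r * @?g r) => eapply (contM' f g)
  | |- @continuous_at _ _ _ (fun r => @?f r + - @?g r) => eapply (contB' f g)
  | |- @continuous_at _ _ _ (fun r => @?f r + @?g r) => eapply (contD' f g)
  | |- @continuous_at _ _ _ (fun r => (@?f r)^-1) => eapply (contV' f)
  end.

Section A.
Context {R : realType}.

Lemma partA (al m c t : R) (u du : R -> R) :
  0 < t -> 0 < c -> c <= 1 + m -> 0 <= al <= 2 ->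
  (forall r : R, 0 < r -> is_derive r 1 u (du r)) ->
  continuous (fun r : R => u (Num.max r 0)) -> continuous (fun r : R => du (Num.max r 0)) ->
  u @ 0^'+ --> u 0 ->
  (\int[lebesgue_measure]_(r in `[0%R, t%R]%classic)
      ((u r) ^+ 2 / (1 + `|r - t|) `^ (2 + m) * (r ^+ 2 / (1 + t + r) `^ al))%:E
   <= ((2 / c) * (t * t * (1 + t + t) `^ (- al) * (u t * u t)))%:E +
      (4 / c ^+ 2)%:E * \int[lebesgue_measure]_(r in `[0%R, t%R]%classic)
      ((du r) ^+ 2 / (1 + `|r - t|) `^ m * (r ^+ 2 / (1 + t + r) `^ al))%:E)%E.
Proof.
move=> t0 c0 cm /andP[al0 al2] hd cu cdu u0.
pose ut r := u (Num.max r 0).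
pose dut r := du (Num.max r 0).
pose gD r := (1 + t) + 1 * r.
pose gS r := (1 + t) + (-1) * r.
pose Ap r := gD r `^ (- al).
pose Bp r := gS r `^ (-1 - m).
pose phi r := r * r * Ap r * Bp r.
pose dphi r := 2 * r * Ap r * Bp r - al * (r * r) * Ap r * Bp r / gD r
   + (1 + m) * (r * r) * Ap r * Bp r / gS r.
pose w1 r := r * r * Ap r * Bp r / gS r.
pose w2 r := r * r * Ap r * Bp r * gS r.
pose P r := phi r * (u r * u r).
pose p r := dphi r * (ut r * ut r) + 2 * phi r * ut r * dut r.
pose f1 r := w1 r * (ut r * ut r).
pose f2 r := w2 r * (dut r * dut r).
have gDp r : 0 <= r -> 0 < gD r by rewrite /gD => r0; lra.
have gSp r : r < t + 1 -> 0 < gS r by rewrite /gS => r0; lra.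
have dphiP x : 0 <= x -> x < t + 1 -> is_derive x 1 phi (dphi x).
  move=> x0 xt.
  have h0 := aff_pow_derive (1 + t) 1 (- al) x (gDp _ x0).
  have h2 := aff_pow_derive (1 + t) (-1) (-1 - m) x (gSp _ xt).
  have h3 := phi_derive _ _ _ _ _ h0 h2.
  rewrite /phi /dphi /Ap /Bp /gD /gS; apply: (is_derive_eq h3).
  by ring.
have cAp x : 0 <= x -> {for x, continuous Ap}.
  by move=> x0; exact: (cont_aff_pow _ _ _ _ (gDp _ x0)).
have cBp x : x < t + 1 -> {for x, continuous Bp}.
  by move=> x0; exact: (cont_aff_pow _ _ _ _ (gSp _ x0)).
have cgS x : {for x, continuous gS} by rewrite /gS; cont_tac.
have cgD x : {for x, continuous gD} by rewrite /gD; cont_tac.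
have cf1 : {in `[0, t], continuous f1}.
  move=> x; rewrite in_itv /= => /andP[x0 xt].
  have xt1 : x < t + 1 by lra.
  have nS := lt0r_neq0 (gSp x xt1).
  have nD := lt0r_neq0 (gDp x x0).
  rewrite /f1 /w1; cont_tac.
  all: try solve [ exact: (cu x) | exact: (cdu x) | exact: (cAp x x0) | exact: (cBp x xt1)
     | exact: cgS | exact: cgD | done ].
have cf2 : {in `[0, t], continuous f2}.
  move=> x; rewrite in_itv /= => /andP[x0 xt].
  have xt1 : x < t + 1 by lra.
  have nS := lt0r_neq0 (gSp x xt1).
  have nD := lt0r_neq0 (gDp x x0).
  rewrite /f2 /w2; cont_tac.
  all: try solve [ exact: (cu x) | exact: (cdu x) | exact: (cAp x x0) | exact: (cBp x xt1)
     | exact: cgS | exact: cgD | done ].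
have cp : {in `[0, t], continuous p}.
  move=> x; rewrite in_itv /= => /andP[x0 xt].
  have xt1 : x < t + 1 by lra.
  have nS := lt0r_neq0 (gSp x xt1).
  have nD := lt0r_neq0 (gDp x x0).
  rewrite /p /dphi /phi; cont_tac.
  all: try solve [ exact: (cu x) | exact: (cdu x) | exact: (cAp x x0) | exact: (cBp x xt1)
     | exact: cgS | exact: cgD | done ].
have dP : {in `]0, t[, forall x : R, is_derive x 1 P (p x)}.
  move=> x; rewrite in_itv /= => /andP[x0 xt].
  have xt1 : x < t + 1 by lra.
  have h := P_derive _ _ _ _ _ (dphiP x (ltW x0) xt1) (hd x x0).
  rewrite /P; apply: (is_derive_eq h).
  by rewrite /p /ut /dut (max_l (ltW x0)).
have Pa : P @ 0^'+ --> P 0.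
  have t1 : (0:R) < t + 1 by lra.
  have hphi0 : phi @ 0^'+ --> phi 0 := cvg_at_right_filter (cont_of_derive _ _ _ (dphiP 0 (lexx 0) t1)).
  rewrite /P /=; exact: (cvgM hphi0 (cvgM u0 u0)).
have Pb : P @ t^'- --> P t.
  have t1 : t < t + 1 by lra.
  exact: (cvg_at_left_filter (cont_of_derive _ _ _ (P_derive _ _ _ _ _ (dphiP t (ltW t0) t1) (hd t t0)))).
have hle : {in `[0, t], forall x : R, f1 x <= 2 / c * p x + 4 / c ^+ 2 * f2 x}.
  move=> x; rewrite in_itv /= => /andP[x0 xt].
  have xt1 : x < t + 1 by lra.
  have Sp := gSp x xt1.
  have Dp := gDp x x0.
  have nS := lt0r_neq0 Sp.
  have nD := lt0r_neq0 Dp.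
  have Ap0 : 0 < Ap x by apply: powR_gt0.
  have Bp0 : 0 < Bp x by apply: powR_gt0.
  have hw1 : 0 <= w1 x.
    rewrite /w1; apply: divr_ge0; last exact: ltW.
    apply: mulr_ge0; last exact: ltW.
    apply: mulr_ge0; last exact: ltW.
    exact: mulr_ge0.
  have hw2 : 0 <= w2 x.
    rewrite /w2; apply: mulr_ge0; last exact: ltW.
    apply: mulr_ge0; last exact: ltW.
    apply: mulr_ge0; last exact: ltW.
    exact: mulr_ge0.
  have hphi2 : phi x ^+ 2 = w1 x * w2 x.
    rewrite /phi /w1 /w2; field; exact: nS.
  have hcw : c * w1 x <= dphi x.
    have e : dphi x = x * Ap x * Bp x * ((2 * gD x - al * x) / gD x) + (1 + m) * w1 x.
      by rewrite /dphi /w1; field; rewrite nS nD.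
    rewrite e; apply: ler_wpDl; last exact: ler_wpM2r.
    apply: mulr_ge0.
      apply: mulr_ge0; last exact: ltW.
      apply: mulr_ge0; last exact: ltW.
      exact: x0.
    apply: divr_ge0; last exact: ltW.
    rewrite /gD; nra.
  have h := key_ineq c (phi x) (dphi x) (w1 x) (w2 x) (ut x) (dut x) c0 hw1 hw2 hcw hphi2.
  rewrite !expr2 in h.
  by rewrite /f1 /p /f2.
have key := piece 0 t (2 / c) (4 / c ^+ 2) f1 f2 p P t0 cf1 cf2 cp dP Pa Pb hle.
have e1 : (\int[lebesgue_measure]_(r in `[0%R, t%R]%classic)
      ((u r) ^+ 2 / (1 + `|r - t|) `^ (2 + m) * (r ^+ 2 / (1 + t + r) `^ al))%:E
    = \int[lebesgue_measure]_(r in `[0%R, t%R]%classic) (f1 r)%:E)%E.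
  apply: eq_integral => x /set_mem /=; rewrite in_itv /= => /andP[x0 xt].
  have xt1 : x < t + 1 by lra.
  have Sp := gSp x xt1.
  have nS := lt0r_neq0 Sp.
  have ax : `|x - t| = t - x by rewrite ler0_norm ?subr_le0 // opprB.
  have eS : 1 + (t - x) = gS x by rewrite /gS; ring.
  have q0 : 0 < gS x `^ (1 + m) by apply: powR_gt0.
  have X0 : 0 < (1 + t + x) `^ al by apply: powR_gt0; lra.
  have e2m : (1 + (t - x)) `^ (2 + m) = gS x * gS x `^ (1 + m).
    rewrite eS (_ : 2 + m = 1 + (1 + m)); last by ring.
    rewrite powRD; last by rewrite nS implybT.
    by rewrite powRr1 // ltW.
  have eB : Bp x = (gS x `^ (1 + m))^-1.
    by rewrite /Bp -powRN; congr (_ `^ _); ring.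
  have eA : Ap x = ((1 + t + x) `^ al)^-1 by rewrite /Ap /gD mul1r powRN.
  congr (_%:E); rewrite /f1 /w1 /ut (max_l x0) ax e2m eB eA.
  by field; rewrite ?nS ?(lt0r_neq0 q0) ?(lt0r_neq0 X0).
have e2 : (\int[lebesgue_measure]_(r in `[0%R, t%R]%classic)
      ((du r) ^+ 2 / (1 + `|r - t|) `^ m * (r ^+ 2 / (1 + t + r) `^ al))%:E
    = \int[lebesgue_measure]_(r in `[0%R, t%R]%classic) (f2 r)%:E)%E.
  apply: eq_integral => x /set_mem /=; rewrite in_itv /= => /andP[x0 xt].
  have xt1 : x < t + 1 by lra.
  have Sp := gSp x xt1.
  have nS := lt0r_neq0 Sp.
  have ax : `|x - t| = t - x by rewrite ler0_norm ?subr_le0 // opprB.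
  have eS : 1 + (t - x) = gS x by rewrite /gS; ring.
  have q0 : 0 < gS x `^ m by apply: powR_gt0.
  have X0 : 0 < (1 + t + x) `^ al by apply: powR_gt0; lra.
  have em : gS x `^ (1 + m) = gS x * gS x `^ m.
    rewrite powRD; last by rewrite nS implybT.
    by rewrite powRr1 // ltW.
  have eB : Bp x = (gS x `^ (1 + m))^-1.
    by rewrite /Bp -powRN; congr (_ `^ _); ring.
  have eA : Ap x = ((1 + t + x) `^ al)^-1 by rewrite /Ap /gD mul1r powRN.
  congr (_%:E); rewrite /f2 /w2 /dut (max_l x0) ax eS eB em eA.
  by field; rewrite ?nS ?(lt0r_neq0 q0) ?(lt0r_neq0 X0).
have eP : 2 / c * (P t - P 0) = 2 / c * (t * t * (1 + t + t) `^ (- al) * (u t * u t)).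
  rewrite /P /phi /Ap /Bp /gD /gS mul1r (_ : 1 + t + -1 * t = 1); last by ring.
  rewrite powR1 /= !mul0r; ring.
by rewrite e1 e2 -eP.
Qed.

End A.

Section B.
Context {R : realType}.

Lemma partB (al g c t M : R) (u du : R -> R) :
  0 <= t -> 0 < c -> c <= g -> 0 <= al <= 2 ->
  (forall r : R, 0 < r -> is_derive r 1 u (du r)) ->
  continuous (fun r : R => u (Num.max r 0)) -> continuous (fun r : R => du (Num.max r 0)) ->
  u @ 0^'+ --> u 0 -> (forall r : R, M < r -> u r = 0) ->
  (\int[lebesgue_measure]_(r in `[t%R, +oo[%classic)
      ((u r) ^+ 2 / (1 + `|r - t|) `^ (1 - g) * (r ^+ 2 / (1 + t + r) `^ al))%:E
   <= (- ((2 / c) * (t * t * (1 + t + t) `^ (- al) * (u t * u t))))%:E +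
      (4 / c ^+ 2)%:E * \int[lebesgue_measure]_(r in `[t%R, +oo[%classic)
      ((du r) ^+ 2 * ((1 + `|r - t|) `^ (1 + g) / (1 + t + r) `^ al) * r ^+ 2)%:E)%E.
Proof.
move=> t0 c0 cg /andP[al0 al2] hd cu cdu u0 uM.
pose b := Num.max M t + 1.
have tM : t <= Num.max M t by rewrite le_max lexx orbT.
have MM : M <= Num.max M t by rewrite le_max lexx.
have tb : t < b by rewrite /b; lra.
have Mb : M < b by rewrite /b; lra.
pose ut r := u (Num.max r 0).
pose dut r := du (Num.max r 0).
pose gD r := (1 + t) + 1 * r.
pose gS r := (1 - t) + 1 * r.
pose Ap r := gD r `^ (- al).
pose Gp r := gS r `^ g.
pose phi r := r * r * Ap r * Gp r.
pose dphi r := 2 * r * Ap r * Gp r - al * (r * r) * Ap r * Gp r / gD r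
   + g * (r * r) * Ap r * Gp r / gS r.
pose w1 r := r * r * Ap r * Gp r / gS r.
pose w2 r := r * r * Ap r * Gp r * gS r.
pose P r := phi r * (u r * u r).
pose p r := dphi r * (ut r * ut r) + 2 * phi r * ut r * dut r.
pose f1 r := w1 r * (ut r * ut r).
pose f2 r := w2 r * (dut r * dut r).
have gDp r : 0 <= r -> 0 < gD r by rewrite /gD => r0; lra.
have gSp r : t <= r -> 0 < gS r by rewrite /gS => r0; lra.
have dphiP x : 0 <= x -> t <= x -> is_derive x 1 phi (dphi x).
  move=> x0 xt.
  have h0 := aff_pow_derive (1 + t) 1 (- al) x (gDp _ x0).
  have h2 := aff_pow_derive (1 - t) 1 g x (gSp _ xt).
  have h3 := phi_derive _ _ _ _ _ h0 h2.
  rewrite /phi /dphi /Ap /Gp /gD /gS; apply: (is_derive_eq h3).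
  by ring.
have cAp x : 0 <= x -> {for x, continuous Ap}.
  by move=> x0; exact: (cont_aff_pow _ _ _ _ (gDp _ x0)).
have cGp x : t <= x -> {for x, continuous Gp}.
  by move=> x0; exact: (cont_aff_pow _ _ _ _ (gSp _ x0)).
have cgS x : {for x, continuous gS} by rewrite /gS; cont_tac.
have cgD x : {for x, continuous gD} by rewrite /gD; cont_tac.
have cf1 : {in `[t, b], continuous f1}.
  move=> x; rewrite in_itv /= => /andP[xt xb].
  have x0 : 0 <= x by lra.
  have nS := lt0r_neq0 (gSp x xt).
  have nD := lt0r_neq0 (gDp x x0).
  rewrite /f1 /w1; cont_tac.
  all: try solve [ exact: (cu x) | exact: (cdu x) | exact: (cAp x x0) | exact: (cGp x xt)
     | exact: cgS | exact: cgD | done ].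
have cf2y : {in `[t, +oo[, continuous f2}.
  move=> x; rewrite in_itv /= andbT => xt.
  have x0 : 0 <= x by lra.
  have nS := lt0r_neq0 (gSp x xt).
  have nD := lt0r_neq0 (gDp x x0).
  rewrite /f2 /w2; cont_tac.
  all: try solve [ exact: (cu x) | exact: (cdu x) | exact: (cAp x x0) | exact: (cGp x xt)
     | exact: cgS | exact: cgD | done ].
have cf2 : {in `[t, b], continuous f2}.
  move=> x; rewrite in_itv /= => /andP[xt xb]; apply: cf2y.
  by rewrite in_itv /= andbT.
have cp : {in `[t, b], continuous p}.
  move=> x; rewrite in_itv /= => /andP[xt xb].
  have x0 : 0 <= x by lra.
  have nS := lt0r_neq0 (gSp x xt).
  have nD := lt0r_neq0 (gDp x x0).
  rewrite /p /dphi /phi; cont_tac.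
  all: try solve [ exact: (cu x) | exact: (cdu x) | exact: (cAp x x0) | exact: (cGp x xt)
     | exact: cgS | exact: cgD | done ].
have dP : {in `]t, b[, forall x : R, is_derive x 1 P (p x)}.
  move=> x; rewrite in_itv /= => /andP[xt xb].
  have x0 : 0 < x by lra.
  have h := P_derive _ _ _ _ _ (dphiP x (ltW x0) (ltW xt)) (hd x x0).
  rewrite /P; apply: (is_derive_eq h).
  by rewrite /p /ut /dut (max_l (ltW x0)).
have Pa : P @ t^'+ --> P t.
  have hphi0 : phi @ t^'+ --> phi t :=
    cvg_at_right_filter (cont_of_derive _ _ _ (dphiP t t0 (lexx t))).
  have ut0 : u @ t^'+ --> u t.
    have [tz|tp] := eqVneq t 0.
      by rewrite tz.
    have tp' : 0 < t by rewrite lt_def tp t0.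
    exact: (cvg_at_right_filter (cont_of_derive _ _ _ (hd t tp'))).
  rewrite /P /=; exact: (cvgM hphi0 (cvgM ut0 ut0)).
have Pb : P @ b^'- --> P b.
  have b0 : 0 < b by lra.
  exact: (cvg_at_left_filter (cont_of_derive _ _ _ (P_derive _ _ _ _ _ (dphiP b (ltW b0) (ltW tb)) (hd b b0)))).
have hle : {in `[t, b], forall x : R, f1 x <= 2 / c * p x + 4 / c ^+ 2 * f2 x}.
  move=> x; rewrite in_itv /= => /andP[xt xb].
  have x0 : 0 <= x by lra.
  have Sp := gSp x xt.
  have Dp := gDp x x0.
  have nS := lt0r_neq0 Sp.
  have nD := lt0r_neq0 Dp.
  have Ap0 : 0 < Ap x by apply: powR_gt0.
  have Gp0 : 0 < Gp x by apply: powR_gt0.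
  have hw1 : 0 <= w1 x.
    rewrite /w1; apply: divr_ge0; last exact: ltW.
    apply: mulr_ge0; last exact: ltW.
    apply: mulr_ge0; last exact: ltW.
    exact: mulr_ge0.
  have hw2 : 0 <= w2 x.
    rewrite /w2; apply: mulr_ge0; last exact: ltW.
    apply: mulr_ge0; last exact: ltW.
    apply: mulr_ge0; last exact: ltW.
    exact: mulr_ge0.
  have hphi2 : phi x ^+ 2 = w1 x * w2 x.
    rewrite /phi /w1 /w2; field; exact: nS.
  have hcw : c * w1 x <= dphi x.
    have e : dphi x = x * Ap x * Gp x * ((2 * gD x - al * x) / gD x) + g * w1 x.
      by rewrite /dphi /w1; field; rewrite nS nD.
    rewrite e; apply: ler_wpDl; last exact: ler_wpM2r.
    apply: mulr_ge0.
      apply: mulr_ge0; last exact: ltW.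
      apply: mulr_ge0; last exact: ltW.
      exact: x0.
    apply: divr_ge0; last exact: ltW.
    rewrite /gD; nra.
  have h := key_ineq c (phi x) (dphi x) (w1 x) (w2 x) (ut x) (dut x) c0 hw1 hw2 hcw hphi2.
  rewrite !expr2 in h.
  by rewrite /f1 /p /f2.
have key := piece t b (2 / c) (4 / c ^+ 2) f1 f2 p P tb cf1 cf2 cp dP Pa Pb hle.
have pt1 x : t <= x -> ((u x) ^+ 2 / (1 + `|x - t|) `^ (1 - g) * (x ^+ 2 / (1 + t + x) `^ al))
    = f1 x.
  move=> xt.
  have x0 : 0 <= x by lra.
  have Sp := gSp x xt.
  have nS := lt0r_neq0 Sp.
  have ax : `|x - t| = x - t by rewrite ger0_norm // subr_ge0.
  have eS : 1 + (x - t) = gS x by rewrite /gS; ring.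
  have q0 : 0 < gS x `^ g by apply: powR_gt0.
  have X0 : 0 < (1 + t + x) `^ al by apply: powR_gt0; lra.
  have e1g : gS x `^ (1 - g) = gS x / gS x `^ g.
    rewrite powRB; last by rewrite nS implybT.
    by rewrite powRr1 // ltW.
  have eA : Ap x = ((1 + t + x) `^ al)^-1 by rewrite /Ap /gD mul1r powRN.
  rewrite /f1 /w1 /ut (max_l x0) ax eS e1g eA /Gp.
  by field; rewrite ?nS ?(lt0r_neq0 q0) ?(lt0r_neq0 X0).
have pt2 x : t <= x -> ((du x) ^+ 2 * ((1 + `|x - t|) `^ (1 + g) / (1 + t + x) `^ al) * x ^+ 2)
    = f2 x.
  move=> xt.
  have x0 : 0 <= x by lra.
  have Sp := gSp x xt.
  have nS := lt0r_neq0 Sp.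
  have ax : `|x - t| = x - t by rewrite ger0_norm // subr_ge0.
  have eS : 1 + (x - t) = gS x by rewrite /gS; ring.
  have q0 : 0 < gS x `^ g by apply: powR_gt0.
  have X0 : 0 < (1 + t + x) `^ al by apply: powR_gt0; lra.
  have e1g : gS x `^ (1 + g) = gS x * gS x `^ g.
    rewrite powRD; last by rewrite nS implybT.
    by rewrite powRr1 // ltW.
  have eA : Ap x = ((1 + t + x) `^ al)^-1 by rewrite /Ap /gD mul1r powRN.
  rewrite /f2 /w2 /dut (max_l x0) ax eS e1g eA /Gp.
  by field; rewrite ?nS ?(lt0r_neq0 q0) ?(lt0r_neq0 X0).
have e1 : (\int[lebesgue_measure]_(r in `[t%R, +oo[%classic)
      ((u r) ^+ 2 / (1 + `|r - t|) `^ (1 - g) * (r ^+ 2 / (1 + t + r) `^ al))%:E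
    = \int[lebesgue_measure]_(r in `[t%R, b]%classic) (f1 r)%:E)%E.
  rewrite [LHS]integral_mkcond [RHS]integral_mkcond.
  apply: eq_integral => x _; rewrite /patch.
  have memA : (x \in `[t, +oo[%classic) = (t <= x).
    apply/idP/idP.
    - by move/set_mem; rewrite /= in_itv /= andbT.
    - by move=> h; apply: mem_set; rewrite /= in_itv /= andbT.
  have memB : (x \in `[t, b]%classic) = (t <= x <= b).
    apply/idP/idP.
    - by move/set_mem; rewrite /= in_itv /=.
    - by move=> h; apply: mem_set; rewrite /= in_itv /=.
  rewrite memA memB.
  have [xt|xt] := leP t x; last by [].
  have [xb|xb] := leP x b.
    by rewrite (pt1 x xt).
  by rewrite uM ?expr2 ?mul0r //; lra.
have e2 : (\int[lebesgue_measure]_(r in `[t%R, b]%classic) (f2 r)%:E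
    = \int[lebesgue_measure]_(r in `[t%R, b]%classic)
      ((du r) ^+ 2 * ((1 + `|r - t|) `^ (1 + g) / (1 + t + r) `^ al) * r ^+ 2)%:E)%E.
  apply: eq_integral => x /set_mem /=; rewrite in_itv /= => /andP[xt _].
  by rewrite (pt2 x xt).
have le2 : (\int[lebesgue_measure]_(r in `[t%R, b]%classic)
      ((du r) ^+ 2 * ((1 + `|r - t|) `^ (1 + g) / (1 + t + r) `^ al) * r ^+ 2)%:E
   <= \int[lebesgue_measure]_(r in `[t%R, +oo[%classic)
      ((du r) ^+ 2 * ((1 + `|r - t|) `^ (1 + g) / (1 + t + r) `^ al) * r ^+ 2)%:E)%E.
  apply: ge0_subset_integral => //.
  - apply/measurable_EFinP.
    have mf2 : measurable_fun `[t, +oo[%classic f2.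
      apply: subspace_continuous_measurable_fun => //.
      by apply: continuous_in_subspaceT; apply/in_continuous_mksetP.
    apply: (@eq_measurable_fun _ _ _ _ _ f2); last exact: mf2.
    by move=> x /set_mem /=; rewrite in_itv /= andbT => xt; rewrite (pt2 x xt).
  - move=> x /=; rewrite in_itv /= andbT => xt; rewrite lee_fin.
    apply: mulr_ge0; last exact: sqr_ge0.
    apply: mulr_ge0; first exact: sqr_ge0.
    by apply: divr_ge0; apply: powR_ge0.
  - by move=> x /=; rewrite !in_itv /= => /andP[->].
have eP : 2 / c * (P b - P t) = - (2 / c * (t * t * (1 + t + t) `^ (- al) * (u t * u t))).
  rewrite /P /phi /Ap /Gp /gD /gS mul1r (_ : 1 - t + 1 * t = 1); last by ring.
  rewrite powR1 /= uM // !mul1r; ring.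
rewrite e1; apply: le_trans key _.
rewrite eP; apply: leeD2l; apply: lee_wpmul2l.
  by rewrite lee_fin divr_ge0 // exprn_ge0 // ltW.
by rewrite e2.
Qed.

End B.

Lemma right_cont0 (R : realType) (u du : R -> R) :
  (fun h : R => h^-1 * (u h - u 0)) @ 0^'+ --> du 0 -> u @ 0^'+ --> u 0.
Proof.
move=> hq.
have h1 : (fun h : R => u 0 + h * (h^-1 * (u h - u 0))) @ 0^'+ --> u 0 + 0 * du 0.
  apply: cvgD; first exact: cvg_cst.
  apply: cvgM; last exact: hq.
  exact: (cvg_at_right_filter cvg_id).
rewrite mul0r addr0 in h1.
apply: cvg_trans h1.
apply: (near_eq_cvg (g := u)); near=> h.
have hp : 0 < h by near: h; exact: nbhs_right_gt.
rewrite mulrA mulfV ?mul1r ?gt_eqF //.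
by rewrite addrC subrK.
Unshelve. all: by end_near.
Qed.

Theorem lemma13p1 (R : realType) (gamma0 m0 : R) :
  0 < gamma0 -> 0 < m0 ->
  exists C : R,
  forall (alpha mu gamma : R),
    0 <= alpha <= 2 -> m0 <= 1 + mu -> gamma0 <= gamma ->
  forall (u du : R -> R), C1_0 u du ->
  forall t : R, 0 <= t ->
  (\int[lebesgue_measure]_(r in `[0%R, t%R]%classic)
      ((u r) ^+ 2 / (1 + `|r - t|) `^ (2 + mu) * (r ^+ 2 / (1 + t + r) `^ alpha))%:E
   + \int[lebesgue_measure]_(r in `[t%R, +oo[%classic)
      ((u r) ^+ 2 / (1 + `|r - t|) `^ (1 - gamma) * (r ^+ 2 / (1 + t + r) `^ alpha))%:E
   <= C%:E * \int[lebesgue_measure]_(r in `[0%R, t%R]%classic)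
      ((du r) ^+ 2 / (1 + `|r - t|) `^ mu * (r ^+ 2 / (1 + t + r) `^ alpha))%:E
   + C%:E * \int[lebesgue_measure]_(r in `[t%R, +oo[%classic)
      ((du r) ^+ 2 * ((1 + `|r - t|) `^ (1 + gamma) / (1 + t + r) `^ alpha) * r ^+ 2)%:E)%E.
Proof.
move=> g0 m0p.
pose c := Num.min gamma0 m0.
have c0 : 0 < c by rewrite /c lt_min g0 m0p.
exists (4 / c ^+ 2).
move=> alpha mu gamma hal hm hg u du [hd [hq [hcd [M hM]]]] t t0.
have cm : c <= 1 + mu by rewrite /c ge_min hm orbT.
have cg : c <= gamma by rewrite /c ge_min hg.
have u0 := @right_cont0 R u du hq.
have cuin : {in `]0, +oo[, continuous u}.
  move=> x; rewrite in_itv /= andbT => x0.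
  exact: (cont_of_derive _ _ _ (hd x x0)).
have cu := ext_cont _ cuin u0.
have [cduin du0] := (continuous_within_itvcyP 0 du).1 hcd.
have cdu := ext_cont _ cduin du0.
have hB := partB alpha gamma c t M u du t0 c0 cg hal hd cu cdu u0 hM.
have [tz|tp] := eqVneq t 0.
  subst t.
  rewrite set_itv1 integral_set1 add0e.
  have hz : - (2 / c * (0 * 0 * (1 + 0 + 0) `^ (- alpha) * (u 0 * u 0))) = 0 :> R.
    by rewrite !mul0r mulr0 oppr0.
  rewrite hz add0e in hB.
  apply: le_trans hB _.
  apply: lee_paddl; last by [].
  apply: mule_ge0; first by rewrite lee_fin divr_ge0 // exprn_ge0 // ltW.
  apply: integral_ge0 => x _; rewrite lee_fin.
  apply: mulr_ge0; last by apply: divr_ge0; [exact: sqr_ge0 | exact: powR_ge0].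
  by apply: divr_ge0; [exact: sqr_ge0 | exact: powR_ge0].
have tp' : 0 < t by rewrite lt_def tp t0.
have hA := partA alpha mu c t u du tp' c0 cm hal hd cu cdu u0.
apply: le_trans (leeD hA hB) _.
by rewrite addeACA EFinN subee // add0e.
Qed.
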